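(* Let $U\in\mathbb{R}^{d\times n}$ be a frame with $n\ge2$, $z\in\mathbb{R}^n_{++}$, and $c\in\mathbb{R}^n_+$ with $\langle c,1_n\rangle=d$. Order the indices so that $x:=\mathrm{lev}^U(z)-c$ is non-decreasing, and let $T$ be a prefix set $\{1,\dots,k\}$, $1\le k\le n-1$, with largest margin $\gamma$ among such prefix sets. Then \[\gamma^2\ge\frac{1}{2n^3}\|\mathrm{lev}^U(z)-c\|_2^2.\]
   Context: A frame is a full row rank matrix $U=(u_1,\dots,u_n)\in\mathbb{R}^{d\times n}$; $Z=\mathrm{diag}(z)$; $\mathrm{lev}^U_j(z):=z_ju_j^{\mathsf T}(UZU^{\mathsf T})^{-1}u_j$. The margin of $T\subseteq[n]$ is the largest $\gamma\ge0$ for which there is $\nu\in\mathbb{R}$ with $\max_{j\in T}(\mathrm{lev}^U_j(z)-c_j)\le\nu-\gamma\le\nu+\gamma\le\min_{j\notin T}(\mathrm{lev}^U_j(z)-c_j)$. *)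

(* Defs.v *)
From mathcomp Require Import all_boot all_order all_algebra all_fingroup.
Set Implicit Arguments. Unset Strict Implicit. Unset Printing Implicit Defensive.
Import Order.TTheory GRing.Theory Num.Theory.
Local Open Scope ring_scope.

Definition frame (R : realFieldType) (d n : nat) (U : 'M[R]_(d, n)) : Prop :=
  row_free U.

Definition lev (R : realFieldType) (d n : nat) (U : 'M[R]_(d, n))
  (z : 'I_n -> R) (j : 'I_n) : R :=
  z j * ((col j U)^T *m invmx (U *m diag_mx (\row_i z i) *m U^T) *m col j U) ord0 ord0.

Definition margin_ok (R : realFieldType) (d n : nat) (U : 'M[R]_(d, n))
  (z c : 'I_n -> R) (T : {set 'I_n}) (g : R) : Prop :=
  0 <= g /\ exists nu : R,
    (forall j, j \in T -> lev U z j - c j <= nu - g) /\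
    (forall j, j \notin T -> nu + g <= lev U z j - c j).

Definition is_margin (R : realFieldType) (d n : nat) (U : 'M[R]_(d, n))
  (z c : 'I_n -> R) (T : {set 'I_n}) (g : R) : Prop :=
  margin_ok U z c T g /\ forall g', margin_ok U z c T g' -> g' <= g.

Definition prefix_set (n : nat) (s : 'S_n) (k : nat) : {set 'I_n} :=
  [set s i | i : 'I_n & (i < k)%N].

(* Main.v *)
Require Import Defs.
From mathcomp Require Import all_boot all_order all_algebra all_fingroup.
Import Order.TTheory GRing.Theory Num.Theory.
From mathcomp Require Import ring lra.
Local Open Scope ring_scope.

Lemma M_unit (R : realFieldType) (d n : nat) (U : 'M[R]_(d, n)) (z : 'I_n -> R) :
  row_free U -> (forall j, 0 < z j) ->
  U *m diag_mx (\row_i z i) *m U^T \in unitmx.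
Proof.
move=> fU zp.
set M := U *m _ *m _.
have key : forall v : 'rV_d, v *m M = 0 -> v = 0.
  move=> v vM.
  set w := v *m U.
  have e : (w *m diag_mx (\row_i z i) *m w^T) ord0 ord0 = 0.
    by rewrite /w trmx_mul !mulmxA -(mulmxA v U) -(mulmxA v) vM mul0mx mxE.
  rewrite mul_mx_diag mxE in e.
  have wdef : w = v *m U by [].
  clearbody w.
  have h0 : forall i, 0 <= (\matrix_(i0, j) (w i0 j * (\row_i1 z i1) 0 j)) ord0 i * w^T i ord0.
    move=> i; rewrite !mxE mulrAC; apply: mulr_ge0; [by rewrite -expr2 sqr_ge0 | exact: ltW].
  have e2 : forall j, w ord0 j = 0.
    move=> j.
    have := (psumr_eq0P (fun i _ => h0 i) e) j isT.
    rewrite !mxE mulrAC => /eqP; rewrite mulf_eq0 (gt_eqF (zp j)) orbF -expr2 sqrf_eq0.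
    by move/eqP.
  have w0 : w = 0 by apply/matrixP => i j; rewrite (ord1 i) e2 mxE.
  by apply/eqP; rewrite -(mulmx_free_eq0 _ fU) -wdef w0.
rewrite -row_free_unit -kermx_eq0; apply/eqP/row_matrixP => i.
by rewrite row0; apply: key; rewrite -row_mul mulmx_ker row0.
Qed.
Lemma sum_lev (R : realFieldType) (d n : nat) (U : 'M[R]_(d, n)) (z : 'I_n -> R) :
  U *m diag_mx (\row_i z i) *m U^T \in unitmx ->
  \sum_j lev U z j = d%:R.
Proof.
move=> Mu.
rewrite /lev.
set M := U *m _ *m _ in Mu *.
set A := invmx M.
transitivity (\tr (A *m M)); last by rewrite mulVmx // mxtrace1.
rewrite /mxtrace.
transitivity (\sum_j \sum_b \sum_a z j * (U a j * A a b * U b j)).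
  apply: eq_bigr => j _; rewrite !mxE big_distrr; apply: eq_bigr => b _.
  rewrite !mxE big_distrl /= big_distrr; apply: eq_bigr => a _; by rewrite !mxE.
transitivity (\sum_a \sum_b \sum_j z j * (U a j * A a b * U b j)).
  under eq_bigr do rewrite exchange_big /=.
  rewrite exchange_big /=.
  by under eq_bigr do rewrite exchange_big /=.
apply: eq_bigr => a _; rewrite mxE; apply: eq_bigr => b _.
rewrite mxE big_distrr; apply: eq_bigr => j _.
rewrite /M mul_mx_diag !mxE; rewrite /=; ring.
Qed.
Lemma mem_prefix n (s : 'S_n) k m : (s m \in prefix_set s k) = (m < k)%N.
Proof.
rewrite /prefix_set; apply/imsetP/idP => [[m' hm' /perm_inj ->]|h]; last by exists m; rewrite ?inE.
by move: hm'; rewrite inE.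
Qed.

Lemma gap_le (R : realFieldType) (d n : nat) (U : 'M[R]_(d, n))
  (z c : 'I_n -> R) (s : 'S_n) (gamma : R) :
  (forall i j : 'I_n, (i <= j)%N ->
     lev U z (s i) - c (s i) <= lev U z (s j) - c (s j)) ->
  (forall k' g', (1 <= k' <= n.-1)%N -> is_margin U z c (prefix_set s k') g' -> g' <= gamma) ->
  forall i i1 : 'I_n, i1 = i.+1 :> nat ->
  (lev U z (s i1) - c (s i1)) - (lev U z (s i) - c (s i)) <= 2 * gamma.
Proof.
move=> mono hmax i i1 ei1.
set x := fun m => lev U z (s m) - c (s m).
rewrite -/(x i) -/(x i1).
have xi : x i <= x i1 by apply: mono; rewrite ei1.
have ->: x i1 - x i = 2 * ((x i1 - x i) / 2) by field.
rewrite ler_pM2l // ; apply: (hmax i.+1).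
  by rewrite /= -ei1 -ltnS prednK ?ltn_ord // (leq_ltn_trans _ (ltn_ord i1)).
split.
  split; first by rewrite divr_ge0 // subr_ge0.
  exists ((x i + x i1) / 2); split.
    move=> j; rewrite -(permKV s j) mem_prefix ltnS => hj.
    have : x (s^-1 j)%g <= x i by apply: mono.
    rewrite /x; lra.
  move=> j; rewrite -(permKV s j) mem_prefix ltnS -ltnNge => hj.
  have : x i1 <= x (s^-1 j)%g by apply: mono; rewrite ei1.
  rewrite /x; lra.
move=> g' [g0 [nu [h1 h2]]].
have := h1 (s i); rewrite mem_prefix ltnSn => /(_ isT).
have := h2 (s i1); rewrite mem_prefix ei1 ltnn => /(_ isT).
rewrite -/(x i) -/(x i1); lra.
Qed.
Lemma final_ineq (R : realFieldType) (n : nat) (y : 'I_n -> R) (a b g : R) :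
  (2 <= n)%N -> 0 <= g ->
  \sum_j y j = 0 -> (forall j, a <= y j <= b) -> b - a <= (n.-1)%:R * (2 * g) ->
  g ^+ 2 >= (2 * n%:R ^+ 3)^-1 * \sum_j (y j) ^+ 2.
Proof.
move=> n2 g0 sy hy hba.
set N := n%:R : R.
set K := (n.-1)%:R : R.
have K0 : 0 <= K by rewrite /K ler0n.
have KN : K <= N by rewrite /K /N ler_nat leq_pred.
have N2 : 2 <= N by rewrite /N (ler_nat R 2 n).
have S1 : \sum_j (y j) ^+ 2 <= \sum_j ((a + b) * y j - a * b).
  apply: ler_sum => j _; have := hy j; case/andP => h1 h2; nra.
rewrite sumrB -mulr_sumr sy mulr0 sumr_const card_ord -/N in S1.
have ab : a <= b by have := hy (Ordinal (leq_trans (isT : (0 < 2)%N) n2)); case/andP; apply: le_trans.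
have S2 : - (a * b) <= K ^+ 2 * g ^+ 2.
  have h : 0 <= b - a by lra.
  have : (b - a) ^+ 2 <= (K * (2 * g)) ^+ 2.
    by rewrite lerXn2r ?nnegrE ?mulr_ge0 //.
  have e1 : - (a * b) = ((b - a) ^+ 2 - (a + b) ^+ 2) / 4 by field.
  have e2 : (K * (2 * g)) ^+ 2 = 4 * (K ^+ 2 * g ^+ 2) by ring.
  have q0 : 0 <= (a + b) ^+ 2 by rewrite sqr_ge0.
  rewrite e1 e2; move: q0; set p := (b - a) ^+ 2; set q := (a + b) ^+ 2;
  set r := K ^+ 2 * g ^+ 2; lra.
have S3 : \sum_j (y j) ^+ 2 <= N * (K ^+ 2 * g ^+ 2).
  apply: (le_trans S1); rewrite sub0r -mulNrn -mulr_natl -/N; apply: ler_wpM2l => //.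
have S4 : N * (K ^+ 2 * g ^+ 2) <= 2 * N ^+ 3 * g ^+ 2.
  have : K ^+ 2 <= N ^+ 2 by rewrite lerXn2r ?nnegrE //; lra.
  move=> hK.
  have g2 : 0 <= g ^+ 2 by rewrite sqr_ge0.
  have N3 : 0 <= N ^+ 3 by apply: exprn_ge0; lra.
  apply: (@le_trans _ _ (N * (N ^+ 2 * g ^+ 2))).
    by apply: ler_wpM2l; [lra | apply: ler_wpM2r].
  rewrite mulrA -exprS; move: (mulr_ge0 N3 g2); lra.
have P : 0 < 2 * N ^+ 3 by apply: mulr_gt0 => //; apply: exprn_gt0; lra.
rewrite mulrC ler_pdivrMr //.
rewrite mulrC; exact: (le_trans S3 S4).
Qed.

Theorem proposition2p6 (R : realFieldType) (d n : nat) (U : 'M[R]_(d, n))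
  (z c : 'I_n -> R) (s : 'S_n) (k : nat) (gamma : R) :
  frame U -> (2 <= n)%N ->
  (forall j, 0 < z j) -> (forall j, 0 <= c j) -> \sum_j c j = d%:R ->
  (forall i j : 'I_n, (i <= j)%N ->
     lev U z (s i) - c (s i) <= lev U z (s j) - c (s j)) ->
  (1 <= k <= n.-1)%N ->
  is_margin U z c (prefix_set s k) gamma ->
  (forall k' g', (1 <= k' <= n.-1)%N -> is_margin U z c (prefix_set s k') g' -> g' <= gamma) ->
  gamma ^+ 2 >= (2 * n%:R ^+ 3)^-1 * \sum_j (lev U z j - c j) ^+ 2.
Proof.
move=> fU n2 zp cp sc mono hk hm hmax.
have g0 : 0 <= gamma by case: hm => [[]].
have sy : \sum_j (lev U z j - c j) = 0.
  by rewrite sumrB sum_lev ?M_unit // sc subrr.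
have n0 : (0 < n)%N by apply: leq_trans n2.
pose i0 : 'I_n := Ordinal n0.
pose x := fun m => lev U z (s m) - c (s m).
pose X := fun m : nat => x (insubd i0 m).
have Xv : forall i : 'I_n, X i = x i.
  by move=> i; rewrite /X; congr x; apply: val_inj; rewrite val_insubd ltn_ord.
have tele : forall m, (m < n)%N -> X m - X 0%N <= m%:R * (2 * gamma).
  elim=> [|m IH] hm'; first by rewrite subrr mul0r.
  have := IH (ltnW hm').
  have := @gap_le _ _ _ _ _ _ _ _ mono hmax (insubd i0 m) (insubd i0 m.+1).
  rewrite !val_insubd hm' (ltnW hm') => /(_ erefl).
  rewrite -/(x _) -/(x _) -/(X _) -/(X _) mulrSr mulrDl mul1r; lra.
apply: (@final_ineq _ _ _ (X 0%N) (X n.-1)) => //.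
  move=> j; have e : lev U z j - c j = x ((s^-1)%g j) by rewrite /x permKV.
  have ln : (n.-1 < n)%N by rewrite prednK.
  rewrite e; have hA := mono i0 ((s^-1)%g j) isT.
  have hB : x ((s^-1)%g j) <= X n.-1.
    by apply: mono; rewrite val_insubd ln -ltnS prednK.
  by rewrite -[X 0%N]/(X i0) Xv hA hB.
have := tele n.-1; rewrite prednK // => /(_ (leqnn n)); lra.
Qed.
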